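(* Let $T=\left(\begin{smallmatrix}\mathbb{C}&\mathbb{C}\\0&\mathbb{C}\end{smallmatrix}\right)$ be the algebra of upper triangular complex $2\times2$ matrices (with norm $\|\left(\begin{smallmatrix}a&b\\0&c\end{smallmatrix}\right)\|=|a|+|b|+|c|$), and let $\phi\in\Delta(T)$ be given by $\phi\left(\begin{smallmatrix}a&b\\0&c\end{smallmatrix}\right)=c$. Then $T$ is not approximately left $\phi$-biprojective.
   Context: $\Delta(A)$ is the set of characters of a Banach algebra $A$; $A\otimes_pA$ is the projective tensor product with $a\cdot(b\otimes c)=ab\otimes c$, $(b\otimes c)\cdot a=b\otimes ca$, $\pi_A(a\otimes b)=ab$. For $\phi\in\Delta(A)$, $A$ is approximately left $\phi$-biprojective if there is a net $(\rho_\alpha)$ of bounded linear maps $A\to A\otimes_pA$ such that for all $a,x\in A$: $\|a\cdot\rho_\alpha(x)-\rho_\alpha(ax)\|\to0$, $\|\rho_\alpha(xa)-\phi(a)\rho_\alpha(x)\|\to0$, and $\phi(\pi_A(\rho_\alpha(x)))-\phi(x)\to0$. *)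

(* Defs.v *)
From Stdlib Require Import Reals.
Open Scope R_scope.

Record C := mkC { re : R; im : R }.
Definition C0 : C := mkC 0 0.
Definition C1 : C := mkC 1 0.
Definition Cadd (z w : C) : C := mkC (re z + re w) (im z + im w).
Definition Copp (z : C) : C := mkC (- re z) (- im z).
Definition Csub (z w : C) : C := Cadd z (Copp w).
Definition Cmul (z w : C) : C :=
  mkC (re z * re w - im z * im w) (re z * im w + im z * re w).
Definition Cnorm (z : C) : R := sqrt (re z * re z + im z * im z).

(** * The algebra T of upper triangular complex 2x2 matrices.
    An element [[a, b], [0, c]] is the function  i11 |-> a, i12 |-> b, i22 |-> c. *)
Inductive idx := i11 | i12 | i22.
Definition T := idx -> C.

Definition sumidx (f : idx -> C) : C := Cadd (Cadd (f i11) (f i12)) (f i22).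
Definition sumidxR (f : idx -> R) : R := f i11 + f i12 + f i22.

Definition Tadd (x y : T) : T := fun k => Cadd (x k) (y k).
Definition Tscale (l : C) (x : T) : T := fun k => Cmul l (x k).
Definition Tmul (x y : T) : T := fun k =>
  match k with
  | i11 => Cmul (x i11) (y i11)
  | i12 => Cadd (Cmul (x i11) (y i12)) (Cmul (x i12) (y i22))
  | i22 => Cmul (x i22) (y i22)
  end.
Definition Tnorm (x : T) : R := sumidxR (fun k => Cnorm (x k)).

Definition Tunit (i : idx) : T := fun k =>
  match i, k with
  | i11, i11 | i12, i12 | i22, i22 => C1
  | _, _ => C0
  end.

Definition phi22 (x : T) : C := x i22.

(** T is 3-dimensional, so T (x) T is 9-dimensional; an element u is given by its
    coordinates u i j on the basis e_i (x) e_j.  Since (T, ||.||) is isometric to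
    l^1_3(C), the projective tensor norm is the l^1 norm of these coordinates
    (l^1(I) (x)_p l^1(J) = l^1(I x J) isometrically). *)
Definition TT := idx -> idx -> C.
Definition TTadd (u v : TT) : TT := fun i j => Cadd (u i j) (v i j).
Definition TTsub (u v : TT) : TT := fun i j => Csub (u i j) (v i j).
Definition TTscale (l : C) (u : TT) : TT := fun i j => Cmul l (u i j).
Definition TTnorm (u : TT) : R := sumidxR (fun i => sumidxR (fun j => Cnorm (u i j))).
Definition tens (x y : T) : TT := fun i j => Cmul (x i) (y j).
(* a . (b (x) c) = ab (x) c *)
Definition lact (a : T) (u : TT) : TT := fun i j => Tmul a (fun k => u k j) i.
(* (b (x) c) . a = b (x) ca *)
Definition ract (u : TT) (a : T) : TT := fun i j => Tmul (fun k => u i k) a j.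
(* pi_T (b (x) c) = bc *)
Definition piT (u : TT) : T := fun k =>
  sumidx (fun i => sumidx (fun j => Cmul (u i j) (Tmul (Tunit i) (Tunit j) k))).

Record DirectedSet := {
  dI :> Type;
  dle : dI -> dI -> Prop;
  dle_refl : forall a, dle a a;
  dle_trans : forall a b c, dle a b -> dle b c -> dle a c;
  dle_upper : forall a b, exists c, dle a c /\ dle b c;
  d_inhabited : inhabited dI
}.

Definition net_to_zero (D : DirectedSet) (f : D -> R) : Prop :=
  forall eps, 0 < eps -> exists a0 : D, forall a : D, dle D a0 a -> Rabs (f a) < eps.

Definition bounded_linear (f : T -> TT) : Prop :=
  (forall x y, f (Tadd x y) = TTadd (f x) (f y)) /\
  (forall l x, f (Tscale l x) = TTscale l (f x)) /\
  (exists M, forall x, TTnorm (f x) <= M * Tnorm x).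

Definition approx_left_phi_biprojective (phi : T -> C) : Prop :=
  exists (D : DirectedSet) (rho : D -> T -> TT),
    (forall al, bounded_linear (rho al)) /\
    (forall a x : T,
       net_to_zero D (fun al => TTnorm (TTsub (lact a (rho al x)) (rho al (Tmul a x)))) /\
       net_to_zero D (fun al => TTnorm (TTsub (rho al (Tmul x a)) (TTscale (phi a) (rho al x)))) /\
       net_to_zero D (fun al => Cnorm (Csub (phi (piT (rho al x))) (phi x)))).

(* Main.v *)
Require Import Defs.
From Stdlib Require Import Reals Lra FunctionalExtensionality.
Open Scope R_scope.

Lemma Cnorm_nn z : 0 <= Cnorm z.
Proof. apply sqrt_pos. Qed.

Lemma re_le z e : Cnorm z < e -> Rabs (re z) < e.
Proof.
  intro H. eapply Rle_lt_trans; [|exact H].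
  unfold Cnorm. rewrite <- sqrt_Rsqr_abs. apply sqrt_le_1_alt.
  unfold Rsqr. pose proof (Rle_0_sqr (im z)). unfold Rsqr in *. lra.
Qed.

Lemma entry_le u i j : Cnorm (u i j) <= TTnorm u.
Proof.
  unfold TTnorm, sumidxR.
  pose proof (Cnorm_nn (u i11 i11)). pose proof (Cnorm_nn (u i11 i12)).
  pose proof (Cnorm_nn (u i11 i22)). pose proof (Cnorm_nn (u i12 i11)).
  pose proof (Cnorm_nn (u i12 i12)). pose proof (Cnorm_nn (u i12 i22)).
  pose proof (Cnorm_nn (u i22 i11)). pose proof (Cnorm_nn (u i22 i12)).
  pose proof (Cnorm_nn (u i22 i22)).
  destruct i, j; lra.
Qed.

Lemma Ceq a b c d : a = c -> b = d -> mkC a b = mkC c d.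
Proof. intros; subst; reflexivity. Qed.

Lemma mul_eq : Tmul (Tunit i12) (Tunit i22) = Tmul (Tunit i11) (Tunit i12).
Proof.
  apply functional_extensionality; intro k; destruct k; simpl;
  unfold Cmul, Cadd; simpl; apply Ceq; ring.
Qed.

Theorem mainTheorem3 : ~ approx_left_phi_biprojective phi22.
Proof.
  intros [D [rho [Hlin H]]].
  destruct (H (Tunit i12) (Tunit i22)) as [H1 _].
  destruct (H (Tunit i12) (Tunit i11)) as [_ [H2 _]].
  destruct (H (Tunit i11) (Tunit i22)) as [_ [_ H3]].
  assert (e : 0 < 1/3) by lra.
  destruct (H1 _ e) as [a1 Ha1].
  destruct (H2 _ e) as [a2 Ha2].
  destruct (H3 _ e) as [a3 Ha3].
  destruct (dle_upper D a1 a2) as [c [Hc1 Hc2]].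
  destruct (dle_upper D c a3) as [c' [Hc Hc3]].
  specialize (Ha1 c' (dle_trans D _ _ _ Hc1 Hc)).
  specialize (Ha2 c' (dle_trans D _ _ _ Hc2 Hc)).
  specialize (Ha3 c' Hc3).
  rewrite mul_eq in Ha1.
  set (v := rho c' (Tmul (Tunit i11) (Tunit i12))) in *.
  set (w := rho c' (Tunit i22)) in *.
  set (z := rho c' (Tunit i11)) in *.

  assert (A := re_le _ _ (Rle_lt_trans _ _ _ (entry_le _ i12 i22) (Rle_lt_trans _ _ _ (Rle_abs _) Ha1))).
  assert (B := re_le _ _ (Rle_lt_trans _ _ _ (entry_le _ i12 i22) (Rle_lt_trans _ _ _ (Rle_abs _) Ha2))).
  assert (Cc := re_le _ _ (Rle_lt_trans _ _ _ (Rle_abs _) Ha3)).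
  clear - A B Cc.
  unfold TTsub, TTscale, lact, Csub, Cadd, Copp, Cmul, phi22, piT, sumidx, Tmul, Tunit in *;
  simpl in *.
  revert A B Cc.
  generalize (w i22 i22) (v i12 i22) (w i12 i22) (z i12 i22) (w i11 i22) (w i11 i11)
    (w i11 i12) (w i12 i11) (w i12 i12) (w i22 i11) (w i22 i12).
  intros [p q] [r s] [t y] [m n] c1 c2 c3 c4 c5 c6 c7; simpl.
  destruct c1, c2, c3, c4, c5, c6, c7; simpl.
  intros A B Cc.
  apply Rabs_def2 in A. apply Rabs_def2 in B. apply Rabs_def2 in Cc.
  lra.
Qed.
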